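(* Let $P$ be a saturated toric sharp monoid with minimal free resolution $i:P\rightarrow F$. If $P_0$ is a face of $P$ and $F_0$ is the face of $F$ generated by $i(P_0)$, then the induced morphism $P/P_0\rightarrow F/F_0$ is a minimal free resolution.
   Context: A saturated toric sharp monoid is a finitely generated, integral, saturated monoid with no nontrivial units whose groupification is torsion-free. For such $P$, let $C(P)\subset P^{gp}\otimes\mathbb{Q}$ be the cone generated by $P$ and $d$ the number of extremal rays of the dual cone $C(P)^{\vee}$. A morphism $f:P\to Q$ of integral monoids is exact if $P=(f^{gp})^{-1}(Q)$ inside $P^{gp}$. A morphism $i:P\rightarrow F$ to a free monoid of rank $d$ is a minimal free resolution if it is exact and for every exact morphism $i':P\rightarrow F'$ to a free monoid $F'$ of rank $d$ there is a unique morphism $j:F\rightarrow F'$ with $i'=j\circ i$. A face of a monoid $Q$ is a submonoid $H$ such that $a+b\in H$ implies $a,b\in H$; the face generated by a subset is the smallest face containing it; $Q/H$ denotes the quotient monoid. *)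

(* Defs.v *)
From HB Require Import structures.
From mathcomp Require Import all_boot all_order all_algebra generic_quotient.
From mathcomp Require Import boolp.
Set Implicit Arguments. Unset Strict Implicit. Unset Printing Implicit Defensive.
Import Order.TTheory GRing.Theory Num.Theory.
Local Open Scope ring_scope.
Local Open Scope quotient_scope.

(* Commutative monoids are MathComp nmodTypes (written additively).
   Predicates on monoids are Prop-valued functions P -> Prop. *)

Section MonoidNotions.
Variable P : nmodType.

Definition integral_monoid := forall a b c : P, a + c = b + c -> a = b.

Definition fin_gen_monoid :=
  exists s : seq P, forall x : P,
    exists c : 'I_(size s) -> nat, x = \sum_(k < size s) s`_k *+ c k.

Definition sharp_monoid := forall a b : P, a + b = 0 -> a = 0.

(* Elements of P^gp are written a - b (a, b in P); in P^gp,
   a - b = c - d iff exists r, a + d + r = c + b + r (Grothendieck).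
   saturated: n (a - b) in P with n >= 1 implies a - b in P. *)
Definition saturated_monoid :=
  forall (n : nat) (a b : P), (0 < n)%N ->
    (exists c r : P, a *+ n + r = b *+ n + c + r) ->
    exists c r : P, a + r = b + c + r.

(* P^gp torsion-free: n (a - b) = 0 with n >= 1 implies a - b = 0. *)
Definition gp_torsion_free :=
  forall (n : nat) (a b : P), (0 < n)%N ->
    (exists r : P, a *+ n + r = b *+ n + r) -> exists r : P, a + r = b + r.

Definition saturated_toric_sharp :=
  [/\ fin_gen_monoid, integral_monoid, saturated_monoid, sharp_monoid
    & gp_torsion_free].

(* The dual cone C(P)^v inside Hom(P^gp (x) Q, Q): its elements are exactly
   the monoid morphisms P -> Q taking nonnegative values on P. *)
Definition dual_cone_elt (phi : P -> rat) :=
  [/\ phi 0 = 0, (forall a b, phi (a + b) = phi a + phi b)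
    & forall a, 0 <= phi a].

Definition extremal_dual (phi : P -> rat) :=
  [/\ dual_cone_elt phi, (exists x, phi x != 0)
    & forall psi1 psi2 : P -> rat, dual_cone_elt psi1 -> dual_cone_elt psi2 ->
        (forall x, phi x = psi1 x + psi2 x) ->
        exists r : rat, 0 <= r /\ forall x, psi1 x = r * phi x].

Definition same_ray (phi psi : P -> rat) :=
  exists r : rat, 0 < r /\ forall x, phi x = r * psi x.

Definition num_dual_rays (d : nat) :=
  exists phis : 'I_d -> P -> rat,
    [/\ forall k, extremal_dual (phis k),
        forall k l, same_ray (phis k) (phis l) -> k = l
      & forall phi, extremal_dual phi -> exists k, same_ray phi (phis k)].

Definition submonoid (H : P -> Prop) :=
  H 0 /\ forall a b, H a -> H b -> H (a + b).

Definition is_face (H : P -> Prop) :=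
  submonoid H /\ forall a b, H (a + b) -> H a /\ H b.

Definition face_gen (S : P -> Prop) : P -> Prop :=
  fun x => forall H, is_face H -> (forall y, S y -> H y) -> H x.

Definition submon_gen (S : P -> Prop) : P -> Prop :=
  fun x => forall H, submonoid H -> (forall y, S y -> H y) -> H x.

End MonoidNotions.

Definition monoid_morph (P Q : nmodType) (f : P -> Q) :=
  f 0 = 0 /\ forall a b, f (a + b) = f a + f b.

Definition mimage (P Q : nmodType) (f : P -> Q) (S : P -> Prop) : Q -> Prop :=
  fun y => exists2 x, S x & y = f x.

(* f : P -> Q is exact: P = (f^gp)^-1(Q) in P^gp, unfolded via the
   Grothendieck description of P^gp and Q^gp:  if f a - f b lies in Q
   then a - b lies in P. *)
Definition exact_morph (P Q : nmodType) (f : P -> Q) :=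
  forall a b : P, (exists q r : Q, f a + r = f b + q + r) ->
    exists p r : P, a + r = b + p + r.

Definition free_of_rank (F : nmodType) (d : nat) :=
  exists e : 'I_d -> F,
    (forall x : F, exists c : 'I_d -> nat, x = \sum_k e k *+ c k) /\
    (forall c c' : 'I_d -> nat,
        \sum_k e k *+ c k = \sum_k e k *+ c' k -> forall k, c k = c' k).

Definition min_free_res (P F : nmodType) (i : P -> F) :=
  exists d : nat,
    [/\ num_dual_rays P d, free_of_rank F d, monoid_morph i, exact_morph i
      & forall (F' : nmodType) (i' : P -> F'),
          free_of_rank F' d -> monoid_morph i' -> exact_morph i' ->
          exists j : F -> F',
            [/\ monoid_morph j, (forall x, i' x = j (i x))
              & forall j' : F -> F', monoid_morph j' ->
                  (forall x, i' x = j' (i x)) -> forall y, j' y = j y]].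

(* P/H is the quotient of P by the congruence a ~ b iff a + h1 = b + h2 for
   some h1, h2 in H (H is replaced by the submonoid it generates, which
   is H itself when H is a face). *)
Section Quotient.
Variables (P : nmodType) (H : P -> Prop).

Definition qrel_b (a b : P) : bool :=
  `[< exists h1 h2, [/\ submon_gen H h1, submon_gen H h2 & a + h1 = b + h2] >].

Lemma smg0 : submon_gen H 0.
Proof. by move=> K [] . Qed.

Lemma smgD a b : submon_gen H a -> submon_gen H b -> submon_gen H (a + b).
Proof. by move=> ha hb K hK hS; case: (hK) => _ hD; apply: hD; [apply: ha|apply: hb]. Qed.

Lemma qrel_refl : reflexive qrel_b.
Proof. by move=> a; apply/asboolP; exists 0, 0; split => //; exact: smg0. Qed.

Lemma qrel_sym : symmetric qrel_b.
Proof.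
move=> a b; apply/asboolP/asboolP => -[h1 [h2 [? ? e]]]; exists h2, h1; by split.
Qed.

Lemma qrel_trans : transitive qrel_b.
Proof.
move=> b a c /asboolP [h1 [h2 [s1 s2 e1]]] /asboolP [h3 [h4 [s3 s4 e2]]].
apply/asboolP; exists (h1 + h3), (h4 + h2); split; try exact: smgD.
by rewrite addrA e1 addrAC e2 addrA.
Qed.

Definition qrel := EquivRel qrel_b qrel_refl qrel_sym qrel_trans.

Definition quotM := {eq_quot qrel}.
HB.instance Definition _ := Choice.on quotM.


Lemma qrelDr a a' b : qrel_b a a' -> qrel_b (a + b) (a' + b).
Proof.
move=> /asboolP [h1 [h2 [s1 s2 e]]]; apply/asboolP; exists h1, h2; split => //.
by rewrite addrAC e addrAC.
Qed.

Lemma qpiP (a b : P) : qrel_b a b -> (\pi_quotM a) = \pi_quotM b.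
Proof. by move=> h; apply/eqmodP; exact: h. Qed.

Lemma qpi_repr (a : P) : qrel_b (repr (\pi_quotM a)) a.
Proof. change (qrel (repr (\pi_quotM a)) a); apply/eqmodP; by rewrite reprK. Qed.

Definition qzero : quotM := \pi_quotM 0.
Definition qadd (x y : quotM) : quotM := \pi_quotM (repr x + repr y).

Lemma qaddA : associative qadd.
Proof.
move=> x y z; rewrite /qadd; apply: qpiP.
apply: (qrel_trans (y := repr x + repr y + repr z)).
  rewrite -addrA [repr x + _]addrC [repr x + (_ + _)]addrC qrel_sym.
  apply: qrelDr; rewrite qrel_sym; exact: qpi_repr.
apply: qrelDr; rewrite qrel_sym; exact: qpi_repr.
Qed.

Lemma qaddC : commutative qadd.
Proof. by move=> x y; rewrite /qadd addrC. Qed.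

Lemma qadd0 : left_id qzero qadd.
Proof.
move=> x; rewrite /qadd -{2}[x]reprK; apply: qpiP.
rewrite -{2}[repr x]add0r; apply: qrelDr; exact: qpi_repr.
Qed.

HB.instance Definition _ := GRing.isNmodule.Build quotM qaddA qaddC qadd0.

End Quotient.

(* the morphism P/H -> F/K induced by i : P -> F (when i(H) lands in K) *)
Definition quot_map (P F : nmodType) (i : P -> F) (H : P -> Prop)
  (K : F -> Prop) : quotM H -> quotM K :=
  fun x => \pi_(quotM K) (i (repr x)).
Arguments quot_map {P F} i H K _.

(* Main.v *)
Require Import Defs.
From HB Require Import structures.
From mathcomp Require Import all_boot all_order all_algebra generic_quotient.
From mathcomp Require Import boolp ring.
From Stdlib Require Classical_Prop.
Set Implicit Arguments. Unset Strict Implicit. Unset Printing Implicit Defensive.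
Import Order.TTheory GRing.Theory Num.Theory.
Local Open Scope ring_scope.
Local Open Scope quotient_scope.

Section Farkas.
Variable m : nat.
Definition dot (u v : 'rV[rat]_m) : rat := \sum_j u 0 j * v 0 j.

Lemma dotDl u1 u2 v : dot (u1 + u2) v = dot u1 v + dot u2 v.
Proof. by rewrite /dot -big_split; apply: eq_bigr => j _; rewrite mxE mulrDl. Qed.
Lemma dotZl a u v : dot (a *: u) v = a * dot u v.
Proof. by rewrite /dot mulr_sumr; apply: eq_bigr => j _; rewrite mxE mulrA. Qed.
Lemma dotNl u v : dot (- u) v = - dot u v.
Proof. by rewrite /dot -sumrN; apply: eq_bigr => j _; rewrite mxE mulNr. Qed.
Lemma dotBl u1 u2 v : dot (u1 - u2) v = dot u1 v - dot u2 v.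
Proof. by rewrite dotDl dotNl. Qed.
Lemma dotC0 : True. Proof. by []. Qed.
Lemma dotC u v : dot u v = dot v u.
Proof. by apply: eq_bigr => j _; rewrite mulrC. Qed.
Lemma dotDr u v1 v2 : dot u (v1 + v2) = dot u v1 + dot u v2.
Proof. by rewrite !(dotC u) dotDl. Qed.
Lemma dotZr a u v : dot u (a *: v) = a * dot u v.
Proof. by rewrite !(dotC u) dotZl. Qed.
Lemma dotNr u v : dot u (- v) = - dot u v.
Proof. by rewrite !(dotC u) dotNl. Qed.
Lemma dotBr u v1 v2 : dot u (v1 - v2) = dot u v1 - dot u v2.
Proof. by rewrite !(dotC u) dotBl. Qed.

Definition cone n (A : 'I_n -> 'rV[rat]_m) b :=
  exists lam : 'I_n -> rat, (forall k, 0 <= lam k) /\ b = \sum_k lam k *: A k.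

Lemma farkas_sep n (A : 'I_n -> 'rV[rat]_m) b : ~ cone A b ->
  exists z, (forall k, 0 <= dot (A k) z) /\ dot b z < 0.
Proof.
elim: n A b => [|n IH] A b.
  move=> ncone.
  have [j bj] : exists j, b 0 j != 0.
    apply: Classical_Prop.NNPP => hn; apply: ncone; exists (fun=> 0); split => //.
    rewrite big_ord0; apply/matrixP => i j; rewrite (ord1 i) !mxE.
    by apply/eqP; apply/negPn/negP => h; apply: hn; exists j.
  exists (- b); split; first by case.
  rewrite dotNr oppr_lt0 /dot (bigD1 j) //=.
  apply: ltr_pwDl; first by rewrite -expr2 exprn_even_gt0.
  by apply: sumr_ge0 => i _; rewrite -expr2 sqr_ge0.

move=> ncone.
set a := A ord0; set R := fun k : 'I_n => A (lift ord0 k).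
have nR : ~ cone R b.
  move=> [lam [lam0 eb]]; apply: ncone.
  exists (fun k => if unlift ord0 k is Some k' then lam k' else 0); split.
    by move=> k; case: (unlift ord0 k).
  rewrite big_ord_recl /= unlift_none scale0r add0r eb.
  by apply: eq_bigr => k _; rewrite liftK.
have [z [Rz bz]] := IH R b nR.
have AP : forall (Q : 'I_n.+1 -> Prop), Q ord0 -> (forall k, Q (lift ord0 k)) -> forall k, Q k.
  by move=> Q Q0 QS k; case: (unliftP ord0 k) => [k' ->|->].
case: (lerP 0 (dot a z)) => az.
  by exists z; split => //; apply: AP.
set al := dot a z.
set R' := fun k => al *: R k - dot (R k) z *: a.
set b' := al *: b - dot b z *: a.
have nR' : ~ cone R' b'.
  move=> [mu [mu0 eb]]; apply: ncone.
  set Sr := \sum_k mu k *: R k; set Sz := \sum_k mu k * dot (R k) z.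
  have eS : \sum_k mu k *: R' k = al *: Sr - Sz *: a.
    rewrite /R' /Sr /Sz scaler_sumr scaler_suml -sumrB; apply: eq_bigr => k _.
    by rewrite scalerBr !scalerA mulrC.
  have alnz : al != 0 by rewrite lt_eqF.
  set t := (dot b z - Sz) / al.
  have t0 : 0 <= t.
    rewrite /t ler_ndivlMr // mul0r subr_le0 (le_trans (ltW bz)) //.
    by apply: sumr_ge0 => k _; apply: mulr_ge0.
  exists (fun k => if unlift ord0 k is Some k' then mu k' else t); split.
    by move=> k; case: (unlift ord0 k).
  rewrite big_ord_recl /= unlift_none.
  have -> : \sum_(i < n) (if unlift ord0 (lift ord0 i) is Some k' then mu k' else t) *: A (lift ord0 i) = Sr.
    by apply: eq_bigr => k _; rewrite liftK.
  apply: (@scalerI _ _ al) => //.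
  rewrite scalerDr scalerA /t mulrC divfK //.
  move: eb; rewrite eS /b' => /eqP; rewrite subr_eq => /eqP ->.
  by rewrite scalerBl -addrA (addrC (- _)) addrC.
have [w [R'w b'w]] := IH R' b' nR'.
exists (al *: w - dot a w *: z); split.
  apply: AP.
    by rewrite dotBr !dotZr -/a -/al mulrC subrr.
  move=> k; move: (R'w k); rewrite /R' dotBr !dotZr dotBl !dotZl.
  by rewrite -/(R k) (mulrC (dot (R k) z)).
by move: b'w; rewrite /b' dotBr !dotZr dotBl !dotZl (mulrC (dot b z)).
Qed.

Lemma farkas n (A : 'I_n -> 'rV[rat]_m) b :
  (forall z, (forall k, 0 <= dot (A k) z) -> 0 <= dot b z) -> cone A b.
Proof.
move=> H; apply: Classical_Prop.NNPP => nc.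
have [z [Az bz]] := farkas_sep nc.
by move: (H z Az); rewrite leNgt bz.
Qed.

End Farkas.

Definition ipos (n : int) : nat := match n with Posz p => p | Negz _ => 0 end.
Definition ineg (n : int) : nat := match n with Posz _ => 0 | Negz q => q.+1 end.
Lemma iposneg (n : int) : ((ipos n)%:R - (ineg n)%:R : rat) = n%:~R.
Proof. by case: n => [p|q] /=; rewrite ?subr0 // sub0r NegzE mulrNz. Qed.


Section FreeLemmas.
Variables (F : nmodType) (d : nat) (e : 'I_d -> F).
Hypothesis egen : forall x : F, exists c : 'I_d -> nat, x = \sum_k e k *+ c k.
Hypothesis euniq : forall c c' : 'I_d -> nat,
  \sum_k e k *+ c k = \sum_k e k *+ c' k -> forall k, c k = c' k.

Definition fcoord (x : F) : 'I_d -> nat := proj1_sig (cid (egen x)).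

Lemma fcoordE x : x = \sum_k e k *+ fcoord x k.
Proof. by rewrite /fcoord; case: cid. Qed.

Lemma fcoord_sum c k : fcoord (\sum_l e l *+ c l) k = c k.
Proof. by apply: euniq; rewrite -fcoordE. Qed.

Lemma fcoord_inj x y : (forall k, fcoord x k = fcoord y k) -> x = y.
Proof. by move=> h; rewrite (fcoordE x) (fcoordE y); apply: eq_bigr => k _; rewrite h. Qed.

Lemma fcoordD x y k : fcoord (x + y) k = (fcoord x k + fcoord y k)%N.
Proof.
have -> : x + y = \sum_l e l *+ (fcoord x l + fcoord y l)%N.
  by rewrite {1}(fcoordE x) {1}(fcoordE y) -big_split; apply: eq_bigr => l _; rewrite mulrnDr.
by rewrite fcoord_sum.
Qed.

Lemma fcoord0 k : fcoord 0 k = 0%N.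
Proof.
have -> : (0 : F) = \sum_l e l *+ (fun=> 0%N) l by rewrite big1 // => l _; rewrite mulr0n.
by rewrite fcoord_sum.
Qed.

Lemma fcoordMn x n k : fcoord (x *+ n) k = (fcoord x k * n)%N.
Proof. elim: n => [|n IH]; first by rewrite mulr0n fcoord0 muln0. by rewrite mulrS fcoordD IH mulnS. Qed.

Lemma fcoord_big (I : Type) (r : seq I) (Pr : pred I) (f : I -> F) k :
  fcoord (\sum_(j <- r | Pr j) f j) k = (\sum_(j <- r | Pr j) fcoord (f j) k)%N.
Proof. exact: (big_morph (fun x => fcoord x k) (fun x y => fcoordD x y k) (fcoord0 k)). Qed.

Lemma fcoord_e l k : fcoord (e l) k = (k == l) :> nat.
Proof.
have -> : e l = \sum_j e j *+ (fun j => nat_of_bool (j == l)) j.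
  rewrite (bigD1 l) //= eqxx mulr1n big1 ?addr0 // => j /negbTE ->; exact: mulr0n.
by rewrite fcoord_sum.
Qed.

Lemma free_cancel (x y z : F) : x + z = y + z -> x = y.
Proof. by move=> h; apply: fcoord_inj => k; move/(congr1 (fun w => fcoord w k)): h; rewrite !fcoordD => /addIn. Qed.

Lemma free_sharp (x y : F) : x + y = 0 -> x = 0.
Proof.
move=> h; apply: fcoord_inj => k; move/(congr1 (fun w => fcoord w k)): h.
by rewrite fcoordD !fcoord0 => /eqP; rewrite addn_eq0 => /andP [/eqP ->].
Qed.

Lemma le_coord x y : (forall k, fcoord y k <= fcoord x k)%N ->
  x = y + \sum_k e k *+ (fcoord x k - fcoord y k)%N.
Proof. by move=> h; apply: fcoord_inj => k; rewrite fcoordD fcoord_sum subnKC. Qed.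
End FreeLemmas.

Section FaceLemmas.
Variable T : nmodType.

Lemma face_gen_face (S : T -> Prop) : is_face (face_gen S).
Proof.
split; first split.
- by move=> K [[K0 _] _].
- by move=> a b ha hb K hK hS; case: (hK) => [[_ KD] _]; apply: KD; [apply: ha|apply: hb].
- move=> a b hab; split => K hK hS; case: (hK) => _ Kf; by have [] := Kf a b (hab K hK hS).
Qed.

Lemma face_gen_sub (S : T -> Prop) x : S x -> face_gen S x.
Proof. by move=> Sx K _ hS; apply: hS. Qed.

Lemma face_mulrn (K : T -> Prop) x n : submonoid K -> K x -> K (x *+ n).
Proof. by move=> [K0 KD] Kx; elim: n => [|n IH]; rewrite ?mulr0n ?mulrS //; apply: KD. Qed.

Lemma face_big (K : T -> Prop) (I : Type) (r : seq I) (Pr : pred I) (f : I -> T) :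
  submonoid K -> (forall j, Pr j -> K (f j)) -> K (\sum_(j <- r | Pr j) f j).
Proof. by move=> [K0 KD] h; apply: big_ind => //; exact: KD. Qed.

Lemma smg_face (H : T -> Prop) : submonoid H -> forall x, submon_gen H x <-> H x.
Proof. by move=> hH x; split => [hx|hx K _ hS]; [apply: hx|apply: hS]. Qed.
End FaceLemmas.

Section QuotLemmas.
Variables (T : nmodType) (H : T -> Prop).
Hypothesis hH : submonoid H.
Definition qpi (a : T) : quotM H := \pi_(quotM H) a.
Local Notation pi := qpi.

Lemma qpi_eqP a b : pi a = pi b <-> exists h1 h2, [/\ H h1, H h2 & a + h1 = b + h2].
Proof.
rewrite /qpi; split.
  move/eqmodP => /asboolP [h1 [h2 [s1 s2 e]]]; exists h1, h2.
  by split => //; apply/(smg_face hH).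
move=> [h1 [h2 [s1 s2 e]]]; apply: qpiP; apply/asboolP; exists h1, h2.
by split => //; apply/(smg_face hH).
Qed.

Lemma pi0 : pi 0 = 0. Proof. by []. Qed.

Lemma piD a b : pi (a + b) = pi a + pi b.
Proof.
rewrite [pi a + pi b]/(_ + _) /= /qadd /qpi; apply: qpiP.
apply: (qrel_trans (y := repr (pi a) + b)).
  by apply: qrelDr; rewrite qrel_sym; apply: qpi_repr.
rewrite [repr (pi a) + b]addrC [repr (pi a) + repr _]addrC.
by apply: qrelDr; rewrite qrel_sym; apply: qpi_repr.
Qed.

Lemma pi_repr x : pi (repr x) = x.
Proof. exact: reprK. Qed.


Lemma pi_h h : H h -> pi h = 0.
Proof. by move=> Hh; rewrite -pi0; apply/qpi_eqP; exists 0, h; case: hH => H0 _; split => //; rewrite addr0 add0r. Qed.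

Lemma pi_big (I : Type) (r : seq I) (Pr : pred I) (f : I -> T) :
  pi (\sum_(j <- r | Pr j) f j) = \sum_(j <- r | Pr j) pi (f j).
Proof. by apply: (big_morph pi piD pi0). Qed.

Lemma pi_mulrn x n : pi (x *+ n) = pi x *+ n.
Proof. by elim: n => [|n IH]; rewrite ?mulr0n ?mulrS ?piD ?IH. Qed.

Lemma pi_surj (x : quotM H) : exists a, x = pi a.
Proof. by exists (repr x); rewrite pi_repr. Qed.
End QuotLemmas.

Section DualLemmas.
Variable T : nmodType.
Lemma dual_sum (phi : T -> rat) (I : Type) (r : seq I) (Pr : pred I) f :
  dual_cone_elt phi -> phi (\sum_(j <- r | Pr j) f j) = \sum_(j <- r | Pr j) phi (f j).
Proof. by move=> [h0 hD _]; apply: (big_morph phi hD h0). Qed.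

Lemma dual_mulrn (phi : T -> rat) x n : dual_cone_elt phi -> phi (x *+ n) = phi x * n%:R.
Proof.
move=> [h0 hD _]; rewrite mulr_natr.
by elim: n => [|n IH]; rewrite ?mulr0n ?h0 // !mulrS hD IH.
Qed.

Lemma same_ray_sym (f g : T -> rat) : same_ray f g -> same_ray g f.
Proof.
move=> [r [r0 h]]; exists r^-1; split; first by rewrite invr_gt0.
by move=> x; rewrite h mulrA mulVf ?mul1r // gt_eqF.
Qed.

Lemma same_ray_trans (f g h : T -> rat) : same_ray f g -> same_ray g h -> same_ray f h.
Proof.
move=> [r [r0 e1]] [s [s0 e2]]; exists (r * s); split; first exact: mulr_gt0.
by move=> x; rewrite e1 e2 mulrA.
Qed.

Lemma dual_scale (f : T -> rat) r : 0 <= r -> dual_cone_elt f -> dual_cone_elt (fun x => r * f x).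
Proof.
move=> r0 [h0 hD hp]; split; first by rewrite h0 mulr0.
  by move=> a b; rewrite hD mulrDr.
by move=> a; apply: mulr_ge0.
Qed.

Lemma extremal_ray (f g : T -> rat) : extremal_dual g -> same_ray f g -> extremal_dual f.
Proof.
move=> [hg [x gx] ext] [r [r0 e]].
have ef : f = (fun x => r * g x) by apply: funext => y; rewrite e.
rewrite ef; split.
- by apply: dual_scale => //; exact: ltW.
- by exists x; rewrite mulf_neq0 // gt_eqF.
move=> psi1 psi2 h1 h2 hs.
have [] := ext (fun x => r^-1 * psi1 x) (fun x => r^-1 * psi2 x).
- by apply: dual_scale => //; rewrite invr_ge0 ltW.
- by apply: dual_scale => //; rewrite invr_ge0 ltW.
- by move=> y; rewrite -mulrDr -hs mulrA mulVf ?mul1r // gt_eqF.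
move=> t [t0 ht]; exists t; split => // y.
move: (ht y) => /(congr1 (fun v => r * v)).
rewrite mulVKf ?gt_eqF // => ->; ring.
Qed.
Lemma dsum (phi : T -> rat) (hphi : dual_cone_elt phi) (I : Type) (r : seq I) (Pr : pred I) f :
  phi (\sum_(j <- r | Pr j) f j) = \sum_(j <- r | Pr j) phi (f j).
Proof. exact: dual_sum. Qed.
Lemma dmul (phi : T -> rat) (hphi : dual_cone_elt phi) x n : phi (x *+ n) = phi x * n%:R.
Proof. exact: dual_mulrn. Qed.
End DualLemmas.

Section ProdFree.
Variables (F1 : nmodType) (n1 n2 d : nat) (e1 : 'I_n1 -> F1).
Hypothesis gen1 : forall x : F1, exists c : 'I_n1 -> nat, x = \sum_k e1 k *+ c k.
Hypothesis uniq1 : forall c c' : 'I_n1 -> nat,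
  \sum_k e1 k *+ c k = \sum_k e1 k *+ c' k -> forall k, c k = c' k.
Variables (sinv : 'I_n1 + 'I_n2 -> 'I_d) (sg : 'I_d -> 'I_n1 + 'I_n2).
Hypotheses (sK : cancel sinv sg) (sK' : cancel sg sinv).

Local Notation G := (F1 * {ffun 'I_n2 -> nat})%type.

Lemma fst_sum (I : Type) (r : seq I) (Pr : pred I) (f : I -> G) :
  (\sum_(j <- r | Pr j) f j).1 = \sum_(j <- r | Pr j) (f j).1.
Proof. exact: (big_morph fst (fun x y => erefl) erefl). Qed.
Lemma snd_sum (I : Type) (r : seq I) (Pr : pred I) (f : I -> G) :
  (\sum_(j <- r | Pr j) f j).2 = \sum_(j <- r | Pr j) (f j).2.
Proof. exact: (big_morph snd (fun x y => erefl) erefl). Qed.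
Lemma fst_mulrn (x : G) n : (x *+ n).1 = x.1 *+ n.
Proof. by elim: n => [|n IH] //; rewrite !mulrS /= IH. Qed.
Lemma snd_mulrn (x : G) n : (x *+ n).2 = x.2 *+ n.
Proof. by elim: n => [|n IH] //; rewrite !mulrS /= IH. Qed.

Definition delta (l : 'I_n2) : {ffun 'I_n2 -> nat} := [ffun l' => nat_of_bool (l' == l)].

Lemma delta_sum (c : 'I_n2 -> nat) l' : (\sum_l delta l *+ c l) l' = c l'.
Proof.
rewrite sum_ffunE (bigD1 l') //= ffunMnE ffunE eqxx big1 ?addr0.
  rewrite natn; reflexivity.
by move=> l hl; rewrite ffunMnE ffunE eq_sym (negbTE hl) mul0rn.
Qed.

Definition eG (k : 'I_d) : G :=
  match sg k with inl j => (e1 j, 0) | inr l => (0, delta l) end.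

Lemma sumG (c : 'I_d -> nat) :
  \sum_k eG k *+ c k = (\sum_j e1 j *+ c (sinv (inl j)), \sum_l delta l *+ c (sinv (inr l))).
Proof.
rewrite (reindex sinv); last by exists sg => u _; [exact: sK|exact: sK'].
rewrite big_sumType /=.
rewrite (eq_bigr (fun j => ((e1 j, 0) : G) *+ c (sinv (inl j)))); last by move=> j _; rewrite /eG sK.
rewrite [X in _ + X](eq_bigr (fun l => ((0, delta l) : G) *+ c (sinv (inr l)))); last by move=> l _; rewrite /eG sK.
rewrite [LHS]surjective_pairing; congr (_, _).
  rewrite /= !fst_sum [X in _ + X]big1 ?addr0; last by move=> l _; rewrite fst_mulrn /= mul0rn.
  by apply: eq_bigr => j _; rewrite fst_mulrn.
rewrite /= !snd_sum [X in X + _]big1 ?add0r; last by move=> l _; rewrite snd_mulrn /= mul0rn.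
by apply: eq_bigr => j _; rewrite snd_mulrn.
Qed.

Lemma prod_free : free_of_rank G d.
Proof.
exists eG; split.
  move=> [y1 y2].
  exists (fun k => match sg k with inl j => fcoord gen1 y1 j | inr l => y2 l end).
  rewrite sumG; congr (_, _).
    by rewrite {1}(fcoordE gen1 y1); apply: eq_bigr => j _; rewrite sK.
  by apply/ffunP => l; rewrite delta_sum sK.
move=> c c'; rewrite !sumG => E.
have E1 := congr1 fst E; have E2 := congr1 snd E; rewrite /= in E1 E2.
move=> k; rewrite -(sK' k); case: (sg k) => [j|l].
  exact: uniq1 E1 j.
by move/ffunP: E2 => /(_ l); rewrite !delta_sum.
Qed.
End ProdFree.

Section Main.
Variables (P F : nmodType) (i : P -> F) (d : nat) (e : 'I_d -> F).
Hypothesis egen : forall x : F, exists c : 'I_d -> nat, x = \sum_k e k *+ c k.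
Hypothesis euniq : forall c c' : 'I_d -> nat,
  \sum_k e k *+ c k = \sum_k e k *+ c' k -> forall k, c k = c' k.
Hypothesis imorph : monoid_morph i.
Hypothesis iexact : exact_morph i.
Hypothesis fg : fin_gen_monoid P.

Definition cc k x := fcoord egen (i x) k.

Lemma ccD k a b : cc k (a + b) = (cc k a + cc k b)%N.
Proof. by rewrite /cc (proj2 imorph) (fcoordD egen euniq). Qed.
Lemma cc0 k : cc k 0 = 0%N.
Proof. by rewrite /cc (proj1 imorph) (fcoord0 egen euniq). Qed.
Lemma ccMn k a n : cc k (a *+ n) = (cc k a * n)%N.
Proof. by elim: n => [|n IH]; rewrite ?mulr0n ?cc0 ?muln0 // mulrS ccD IH mulnS. Qed.

Lemma exactP a b : (forall k, cc k b <= cc k a)%N -> exists p r, a + r = b + p + r.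
Proof.
move=> h; apply: iexact; exists (\sum_k e k *+ (cc k a - cc k b)%N), 0.
by rewrite !addr0; apply: (le_coord euniq).
Qed.

Definition cq k x : rat := (cc k x)%:R.

Lemma dual_cq k : dual_cone_elt (cq k).
Proof. by split => [|a b|a]; rewrite /cq ?cc0 ?ccD ?natrD ?ler0n. Qed.

Lemma cone_of_dual phi : dual_cone_elt phi ->
  exists lam : 'I_d -> rat, (forall k, 0 <= lam k) /\ forall x, phi x = \sum_k lam k * cq k x.
Proof.
move=> hphi.
have [s hs] := fg.
pose m := size s.
pose vf (f : P -> rat) : 'rV[rat]_m := \row_j f s`_j.
pose A := fun k => vf (cq k).
have key : forall f : P -> rat, dual_cone_elt f -> forall (p n : 'I_m -> nat),
    f (\sum_(j < m) s`_j *+ p j) - f (\sum_(j < m) s`_j *+ n j) = \sum_(j < m) f s`_j * ((p j)%:R - (n j)%:R).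
  move=> f hf p n; rewrite !(dsum hf) -sumrB; apply: eq_bigr => j _.
  by rewrite !(dmul hf) mulrBr.
have: cone A (vf phi).
  apply: farkas => z Az.
  pose N : int := \prod_j denq (z 0 j).
  have N0 : 0 < N by apply: prodr_gt0 => j _; exact: denq_gt0.
  pose nz j : int := (\prod_(l | l != j) denq (z 0 l)) * numq (z 0 j).
  have enz j : ((nz j)%:~R : rat) = N%:~R * z 0 j.
    rewrite /N (bigD1 j) //= /nz !rmorphM /= numqE; ring.
  pose a := \sum_(j < m) s`_j *+ ipos (nz j).
  pose b := \sum_(j < m) s`_j *+ ineg (nz j).
  have kf : forall f, dual_cone_elt f -> f a - f b = N%:~R * dot (vf f) z.
    move=> f hf; rewrite key // /dot mulr_sumr; apply: eq_bigr => j _.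
    by rewrite iposneg enz mxE; ring.
  have hab : forall k, (cc k b <= cc k a)%N.
    move=> k; rewrite -(ler_nat rat) -subr_ge0; move: (kf _ (dual_cq k)); rewrite /cq => ->.
    by apply: mulr_ge0; [rewrite ler0z ltW | exact: Az].
  have [p [r epr]] := exactP hab.
  have : 0 <= phi a - phi b.
    case: hphi => h0 hD hp.
    move/(congr1 phi): epr; rewrite !hD => /eqP; rewrite (can2_eq (addrK _) (subrK _)) => /eqP ->.
    by rewrite addrK addrAC subrr add0r hp.
  by rewrite kf // pmulr_rge0 // ltr0z.
move=> [lam [lam0 elam]]; exists lam; split => // x.
have ej : forall j : 'I_m, phi s`_j = \sum_k lam k * cq k s`_j.
  move=> j; move/matrixP: elam => /(_ 0 j); rewrite mxE => ->.
  by rewrite summxE; apply: eq_bigr => k _; rewrite !mxE.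
have [cx ->] := hs x.
rewrite (dsum hphi).
under eq_bigr => j _ do rewrite (dmul hphi) ej mulr_suml.
rewrite exchange_big /=; apply: eq_bigr => k _.
rewrite (dsum (dual_cq k)) mulr_sumr; apply: eq_bigr => j _.
by rewrite (dmul (dual_cq k)) mulrA.
Qed.


Lemma ext_ray phi : extremal_dual phi -> exists k, same_ray phi (cq k).
Proof.
move=> [hphi [x0 hx0] ext].
have [lam [lam0 elam]] := cone_of_dual hphi.
have [k hk] : exists k, lam k * cq k x0 != 0.
  apply: Classical_Prop.NNPP => hn; move: hx0; rewrite elam big1 ?eqxx // => k _.
  by case: (eqVneq (lam k * cq k x0) 0) => // h; case: hn; exists k.
pose psi1 := fun x => lam k * cq k x.
pose psi2 := fun x => \sum_(l | l != k) lam l * cq l x.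
have d1 : dual_cone_elt psi1 by apply: dual_scale => //; exact: dual_cq.
have d2 : dual_cone_elt psi2.
  split.
  - by rewrite /psi2 big1 // => l _; rewrite /cq cc0 mulr0.
  - by move=> a b; rewrite /psi2 -big_split; apply: eq_bigr => l _; rewrite /cq ccD natrD mulrDr.
  - by move=> a; apply: sumr_ge0 => l _; apply: mulr_ge0; rewrite ?ler0n.
have [r [r0 hr]] := ext psi1 psi2 d1 d2 (fun x => etrans (elam x) (bigD1 k isT)).
have rnz : r != 0.
  by apply/eqP => r0'; move: hk; rewrite [_ * _](hr x0) r0' mul0r eqxx.
have lnz : lam k != 0 by apply/eqP => l0; move: hk; rewrite l0 mul0r eqxx.
exists k, (lam k / r); split.
  by rewrite divr_gt0 // lt_def ?rnz ?lnz ?lam0.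
move=> x; have E := hr x; rewrite /psi1 in E.
by rewrite -(mulKf rnz (phi x)) -E; field.
Qed.

Hypothesis rays : num_dual_rays P d.

Lemma rays_props : (forall k, extremal_dual (cq k)) /\ (forall k l, same_ray (cq k) (cq l) -> k = l).
Proof.
have [phis [pext pdist pall]] := rays.
have [rho hrho] : exists rho : 'I_d -> 'I_d, forall r, same_ray (phis r) (cq (rho r)).
  by exists (fun r => proj1_sig (cid (ext_ray (pext r)))) => r; case: cid.
have rinj : injective rho.
  move=> r r' er; apply: pdist; apply: same_ray_trans (hrho r) _.
  by rewrite er; exact: same_ray_sym.
have [rinv hK hK'] := injF_bij rinj.
have hk : forall k, same_ray (cq k) (phis (rinv k)).
  by move=> k; apply: same_ray_sym; have := hrho (rinv k); rewrite hK'.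
split.
  by move=> k; apply: extremal_ray (pext (rinv k)) (hk k).
move=> k l hkl; apply: (can_inj hK'); apply: pdist.
apply: same_ray_trans (same_ray_sym (hk k)) _; exact: same_ray_trans hkl (hk l).
Qed.

Variables (P0 : P -> Prop) (hP0 : is_face P0).
Local Notation F0 := (face_gen (mimage i P0)).
Local Notation piQ := (qpi P0).
Local Notation piF := (qpi F0).
Local Notation C := (fcoord egen).

Lemma hF0 : is_face F0. Proof. exact: face_gen_face. Qed.
Lemma iF0 p : P0 p -> F0 (i p).
Proof. by move=> h; apply: face_gen_sub; exists p. Qed.

Definition S := [set k | `[< exists p, P0 p /\ (0 < cc k p)%N >]].

Lemma inS k : k \in S <-> exists p, P0 p /\ (0 < cc k p)%N.
Proof. by rewrite inE; split => /asboolP. Qed.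

Lemma notS k p : k \notin S -> P0 p -> cc k p = 0%N.
Proof.
move=> kS hp; apply/eqP; rewrite -leqn0 leqNgt; apply/negP => h.
by move/negP: kS; apply; apply/inS; exists p.
Qed.

Lemma F0sub : submonoid F0. Proof. by case: hF0. Qed.

Lemma F0char y : F0 y <-> forall k, k \notin S -> C y k = 0%N.
Proof.
split.
  move=> hy; apply: (hy (fun y => forall k, k \notin S -> C y k = 0%N)).
    split; first split.
    - by move=> k _; rewrite (fcoord0 egen euniq).
    - by move=> a b ha hb k kS; rewrite (fcoordD egen euniq) ha ?hb.
    - move=> a b hab; split => k kS; move: (hab k kS); rewrite (fcoordD egen euniq);
      by move/eqP; rewrite addn_eq0 => /andP [/eqP h1 /eqP h2].
  by move=> z [p hp ->] k kS; exact: notS.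
move=> hy; rewrite (fcoordE egen y); apply: (face_big _ F0sub) => k _.
 case: (boolP (k \in S)) => kS; last first.
  by rewrite hy // mulr0n; case: hF0 => [[]].
apply: (face_mulrn _ F0sub).
have [p [hp cp]] := (inS k).1 kS.
have eq : i p = e k + \sum_l e l *+ (C (i p) l - C (e k) l)%N.
  apply: (le_coord euniq) => l; rewrite (fcoord_e egen euniq); case: eqP => [->|] //.
have := iF0 hp; rewrite eq => h.
by have [] := hF0.2 _ _ h.
Qed.

Lemma P0sub : submonoid P0. Proof. by case: hP0. Qed.

Lemma piF_eq y y' : piF y = piF y' <-> forall k, k \notin S -> C y k = C y' k.
Proof.
split.
  move/(qpi_eqP F0sub) => [h1 [h2 [s1 s2 eq]]] k kS.
  move/(congr1 (fun w => C w k)): eq; rewrite !(fcoordD egen euniq).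
  by rewrite ((F0char _).1 s1 k kS) ((F0char _).1 s2 k kS) !addn0.
move=> h; apply/(qpi_eqP F0sub).
exists (\sum_k e k *+ (if k \in S then C y' k else 0%N)).
exists (\sum_k e k *+ (if k \in S then C y k else 0%N)).
split.
- by apply/F0char => k kS; rewrite (fcoord_sum egen euniq) (negbTE kS).
- by apply/F0char => k kS; rewrite (fcoord_sum egen euniq) (negbTE kS).
apply: (fcoord_inj (egen:=egen)) => k; rewrite !(fcoordD egen euniq) !(fcoord_sum egen euniq).
case: (boolP (k \in S)) => kS; first exact: addnC.
by rewrite !addn0 h.
Qed.

Lemma piQ_eq a b : piQ a = piQ b -> exists h1 h2, [/\ P0 h1, P0 h2 & a + h1 = b + h2].
Proof. by move/(qpi_eqP P0sub). Qed.

Lemma piQ_cc a b k : piQ a = piQ b -> k \notin S -> cc k a = cc k b.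
Proof.
move/piQ_eq => [h1 [h2 [s1 s2 eq]]] kS.
by move/(congr1 (cc k)): eq; rewrite !ccD (notS kS s1) (notS kS s2) !addn0.
Qed.

Lemma piQ_F a b : piQ a = piQ b -> piF (i a) = piF (i b).
Proof.
move/piQ_eq => [h1 [h2 [s1 s2 eq]]]; apply/(qpi_eqP F0sub).
exists (i h1), (i h2); split; try exact: iF0.
by rewrite -!(proj2 imorph) eq.
Qed.

Local Notation ib := (quot_map i P0 F0).

Lemma ib_pi a : ib (piQ a) = piF (i a).
Proof. by change (piF (i (repr (piQ a))) = piF (i a)); apply: piQ_F; apply: pi_repr. Qed.

Lemma ib_morph : monoid_morph ib.
Proof.
split.
  by rewrite -(pi0 P0) ib_pi (proj1 imorph) (pi0 F0).
move=> x y; have [a ->] := pi_surj x; have [b ->] := pi_surj y.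
by rewrite -piD !ib_pi (proj2 imorph) piD.
Qed.

Lemma exists_h : exists h, P0 h /\ forall k, k \in S -> (0 < cc k h)%N.
Proof.
have : forall l : seq 'I_d, exists h, P0 h /\ forall k, k \in l -> k \in S -> (0 < cc k h)%N.
  elim => [|k l [h [hh hk]]]; first by exists 0; split => //; case: P0sub.
  case: (boolP (k \in S)) => kS.
    have [p [hp cp]] := (inS k).1 kS.
    exists (h + p); split; first by case: P0sub => _; apply.
    move=> k'; rewrite inE => /orP [/eqP -> _|kl kS']; rewrite ccD.
      by rewrite addn_gt0 cp orbT.
    by rewrite addn_gt0 hk.
  exists h; split => // k'; rewrite inE => /orP [/eqP ->|kl]; first by move=> kS'; rewrite kS' in kS.
  exact: hk.
move=> /(_ (enum 'I_d)) [h [hh hk]]; exists h; split => // k; apply: hk; exact: mem_enum.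
Qed.

Lemma ib_exact : exact_morph ib.
Proof.
move=> x y [q [r E]].
have [a ea] := pi_surj x; have [b eb] := pi_surj y.
have [qq eq] := pi_surj q; have [rr er] := pi_surj r.
move: E; rewrite ea eb eq er !ib_pi -(piD F0 (i b) qq) -(piD F0 (i a) rr) -piD => /piF_eq E.
have hk : forall k, k \notin S -> (cc k b <= cc k a)%N.
  move=> k kS; move: (E k kS); rewrite !(fcoordD egen euniq) => /eqP.
  rewrite eqn_add2r => /eqP; rewrite -/(cc k a) -/(cc k b) => ->; exact: leq_addr.
have [h [hh hpos]] := exists_h.
pose N := (\sum_k cc k b)%N.
have hle : forall k, (cc k b <= cc k (a + h *+ N))%N.
  move=> k; rewrite ccD ccMn.
  case: (boolP (k \in S)) => kS.
    apply: leq_trans (leq_addl _ _); apply: leq_trans (leq_pmull _ (hpos k kS)).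
    by rewrite /N (bigD1 k) //= leq_addr.
  by apply: leq_trans (hk k kS) (leq_addr _ _).
have [p [r' epr]] := exactP hle.
exists (piQ p), (piQ r').
have ea' : piQ a = piQ (a + h *+ N) by rewrite piD (pi_h P0sub (face_mulrn _ P0sub hh)) addr0.
by rewrite ea' -(piD P0 (a + h *+ N) r') epr !piD.
Qed.

Definition tk (j : 'I_#|~: S|) : 'I_d := enum_val j.

Lemma tk_notS j : tk j \notin S.
Proof. by have := enum_valP j; rewrite inE. Qed.

Lemma notS_tk k : k \notin S -> exists j, k = tk j.
Proof.
move=> kS; have kS' : k \in ~: S by rewrite inE.
by exists (enum_rank_in kS' k); rewrite /tk enum_rankK_in.
Qed.

Lemma C_tk_sum (c : 'I_#|~: S| -> nat) j : C (\sum_j' e (tk j') *+ c j') (tk j) = c j.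
Proof.
rewrite (fcoord_big egen euniq) (bigD1 j) //= (fcoordMn egen euniq) (fcoord_e egen euniq) eqxx mul1n.
rewrite big1 ?addn0 // => j' hj'.
by rewrite (fcoordMn egen euniq) (fcoord_e egen euniq) (inj_eq enum_val_inj) eq_sym (negbTE hj').
Qed.

Lemma quot_free : free_of_rank (quotM F0) #|~: S|.
Proof.
exists (fun j => piF (e (tk j))); split.
  move=> x; have [y ->] := pi_surj x; exists (fun j => C y (tk j)).
  rewrite (eq_bigr (fun j => piF (e (tk j) *+ C y (tk j)))); last by move=> j _; rewrite pi_mulrn.
  rewrite -pi_big; apply/piF_eq => k /notS_tk [j ->]; by rewrite C_tk_sum.
move=> c c' E j.
have E' : piF (\sum_j e (tk j) *+ c j) = piF (\sum_j e (tk j) *+ c' j).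
  rewrite !pi_big; move: E; rewrite !(eq_bigr _ (fun j _ => pi_mulrn F0 _ _)) => E.
  exact: E.
by have := (piF_eq _ _).1 E' (tk j) (tk_notS j); rewrite !C_tk_sum.
Qed.

Definition phisQ (j : 'I_#|~: S|) (x : quotM P0) : rat := cq (tk j) (repr x).

Lemma phisQ_pi j a : phisQ j (piQ a) = cq (tk j) a.
Proof. by rewrite /phisQ /cq (piQ_cc (pi_repr (piQ a)) (tk_notS j)). Qed.

Lemma lift_dual (psi : quotM P0 -> rat) : dual_cone_elt psi -> dual_cone_elt (fun a => psi (piQ a)).
Proof. by move=> [h0 hD hp]; split => [|a b|a] //=; rewrite ?pi0 ?piD. Qed.

Lemma desc_dual (phi : P -> rat) : dual_cone_elt phi -> (forall h, P0 h -> phi h = 0) ->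
  dual_cone_elt (fun x : quotM P0 => phi (repr x)) /\ forall a, phi (repr (piQ a)) = phi a.
Proof.
move=> [h0 hD hp] hv.
have cst : forall a b, piQ a = piQ b -> phi a = phi b.
  move=> a b /piQ_eq [h1 [h2 [s1 s2 eq]]].
  by move/(congr1 phi): eq; rewrite !hD (hv _ s1) (hv _ s2) !addr0.
have desc : forall a, phi (repr (piQ a)) = phi a by move=> a; apply: cst; apply: pi_repr.
split => //; split => [|x y|x] //.
  by rewrite -(pi0 P0) desc.
have [a ->] := pi_surj x; have [b ->] := pi_surj y.
by rewrite -piD !desc hD.
Qed.

Lemma quot_rays : num_dual_rays (quotM P0) #|~: S|.
Proof.
have [ext_all dist] := rays_props.
exists phisQ; split.
- move=> j.
  have hv : forall h, P0 h -> cq (tk j) h = 0.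
    by move=> h hh; rewrite /cq (notS (tk_notS j) hh).
  have [dd desc] := desc_dual (dual_cq (tk j)) hv.
  have [_ [x hx] ext] := ext_all (tk j).
  split => //.
    by exists (piQ x); rewrite phisQ_pi.
  move=> psi1 psi2 h1 h2 hs.
  have [r [r0 hr]] := ext (fun a => psi1 (piQ a)) (fun a => psi2 (piQ a))
    (lift_dual h1) (lift_dual h2) (fun a => etrans (esym (phisQ_pi j a)) (hs (piQ a))).
  by exists r; split => // y; have [a ->] := pi_surj y; rewrite hr phisQ_pi.
- move=> j j' [r [r0 h]]; apply: enum_val_inj; apply: dist; exists r; split => // a.
  by have := h (piQ a); rewrite !phisQ_pi.
move=> psi [hpsi [x hx] ext].
have el : extremal_dual (fun a => psi (piQ a)).
  split; first exact: lift_dual.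
    by have [a ea] := pi_surj x; exists a; rewrite -ea.
  move=> f1 f2 d1 d2 hs.
  have van : forall h, P0 h -> f1 h = 0 /\ f2 h = 0.
    move=> h hh; have := hs h; rewrite (pi_h P0sub hh); case: hpsi => -> _ _.
    case: d1 => _ _ p1; case: d2 => _ _ p2.
    by move/esym/eqP; rewrite paddr_eq0 // => /andP [/eqP -> /eqP ->].
  have [dd1 desc1] := desc_dual d1 (fun h hh => (van h hh).1).
  have [dd2 desc2] := desc_dual d2 (fun h hh => (van h hh).2).
  have hs' : forall y, psi y = f1 (repr y) + f2 (repr y).
    by move=> y; have [a ->] := pi_surj y; rewrite desc1 desc2 hs.
  have [r [r0 hr]] := ext _ _ dd1 dd2 hs'.
  by exists r; split => // a; rewrite -desc1 hr.
have [k [r [r0 hk]]] := ext_ray el.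
have kS : k \notin S.
  apply/negP => /inS [p [hp cp]].
  have := hk p; rewrite (pi_h P0sub hp); case: hpsi => -> _ _.
  move/esym/eqP; rewrite mulf_eq0 gt_eqF //= /cq pnatr_eq0 => /eqP c0.
  by rewrite c0 in cp.
have [j ekj] := notS_tk kS.
exists j, r; split => // y; have [a ->] := pi_surj y.
by rewrite phisQ_pi -ekj hk.
Qed.

Hypothesis iuniv : forall (F' : nmodType) (i' : P -> F'),
  free_of_rank F' d -> monoid_morph i' -> exact_morph i' ->
  exists j : F -> F',
    [/\ monoid_morph j, (forall x, i' x = j (i x))
      & forall j' : F -> F', monoid_morph j' ->
          (forall x, i' x = j' (i x)) -> forall y, j' y = j y].

Definition sinv (u : 'I_#|~: S| + 'I_#|S|) : 'I_d :=
  match u with inl j => tk j | inr l => enum_val l end.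

Lemma sinv_bij : bijective sinv.
Proof.
apply: inj_card_bij; last by rewrite card_sum !card_ord addnC cardsC card_ord.
move=> [j|l] [j'|l'] /=.
- by move/enum_val_inj => ->.
- by move=> E; have := tk_notS j; rewrite E (enum_valP l').
- by move=> E; have := tk_notS j'; rewrite -E (enum_valP l).
- by move/enum_val_inj => ->.
Qed.

Lemma quot_univ (F' : nmodType) (i' : quotM P0 -> F') :
  free_of_rank F' #|~: S| -> monoid_morph i' -> exact_morph i' ->
  exists j : quotM F0 -> F',
    [/\ monoid_morph j, (forall x, i' x = j (ib x))
      & forall j' : quotM F0 -> F', monoid_morph j' ->
          (forall x, i' x = j' (ib x)) -> forall y, j' y = j y].
Proof.
move=> [e' [e'gen e'uniq]] i'm i'ex.
have [sg sK sK'] := sinv_bij.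
pose G := (F' * {ffun 'I_#|S| -> nat})%type.
pose i'' : P -> G := fun x => (i' (piQ x), [ffun l => cc (enum_val l) x]).
have freeG : free_of_rank G d := prod_free e'gen e'uniq sK sK'.
have i''m : monoid_morph i''.
  split.
    rewrite /i'' pi0 (proj1 i'm); congr (_, _); apply/ffunP => l; by rewrite !ffunE cc0.
  move=> a b; rewrite /i'' piD (proj2 i'm); congr (_, _); apply/ffunP => l.
  by rewrite !ffunE ccD.
have i''ex : exact_morph i''.
  move=> a b [q [r E]].
  have E1 := congr1 fst E; rewrite /= in E1.
  have [pb [rb Eb]] := i'ex (piQ a) (piQ b) (ex_intro _ q.1 (ex_intro _ r.1 E1)).
  have [p ep] := pi_surj pb; have [r0 er0] := pi_surj rb.
  move: Eb; rewrite ep er0 -(piD P0 a r0) -(piD P0 b p) -(piD P0 (b + p) r0) => /piQ_eq [h1 [h2 [s1 s2 Eh]]].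
  apply: exactP => k; case: (boolP (k \in S)) => kS.
    have -> : k = enum_val (enum_rank_in kS k) by rewrite enum_rankK_in.
    move/(congr1 (fun g : G => g.2 (enum_rank_in kS k))): E; rewrite /= !ffunE => /eqP.
    by rewrite eqn_add2r => /eqP ->; exact: leq_addr.
  move/(congr1 (cc k)): Eh; rewrite !ccD (notS kS s1) (notS kS s2) !addn0 => /eqP.
  by rewrite eqn_add2r => /eqP ->; exact: leq_addr.
have [j'' [j''m hj'' j''u]] := iuniv freeG i''m i''ex.
have Z : forall y, F0 y -> (j'' y).1 = 0.
  move=> y hy; apply: (hy (fun y => (j'' y).1 = 0)).
    split; first split.
    - by rewrite (proj1 j''m).
    - by move=> a b ha hb; rewrite (proj2 j''m) /= ha hb addr0.
    - move=> a b; rewrite (proj2 j''m) /= => hab; split.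
        exact: free_sharp e'gen e'uniq _ _ hab.
      by rewrite addrC in hab; exact: free_sharp e'gen e'uniq _ _ hab.
  move=> z [p hp ->]; rewrite -hj'' /= (pi_h P0sub hp); exact: (proj1 i'm).
pose j := fun y : quotM F0 => (j'' (repr y)).1.
have j_pi : forall y, j (piF y) = (j'' y).1.
  move=> y; have := pi_repr (piF y); rewrite -/(piF (repr (piF y))).
  move/(qpi_eqP F0sub) => [f1 [f2 [s1 s2 Ef]]].
  move/(congr1 (fun w => (j'' w).1)): Ef; rewrite !(proj2 j''m) /= (Z _ s1) (Z _ s2) !addr0.
  by [].
exists j; split.
- split.
    by rewrite -(pi0 F0) j_pi (proj1 j''m).
  move=> x y; have [a ->] := pi_surj x; have [b ->] := pi_surj y.
  by rewrite -piD !j_pi (proj2 j''m).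
- move=> x; have [a ->] := pi_surj x.
  by rewrite ib_pi j_pi -hj''.
move=> j' j'm hj' y.
pose j3 : F -> G := fun y => (j' (piF y), [ffun l => C y (enum_val l)]).
have j3m : monoid_morph j3.
  split.
    rewrite /j3 pi0 (proj1 j'm); congr (_, _); apply/ffunP => l.
    by rewrite !ffunE (fcoord0 egen euniq).
  move=> a b; rewrite /j3 piD (proj2 j'm); congr (_, _); apply/ffunP => l.
  by rewrite !ffunE (fcoordD egen euniq).
have hj3 : forall x, i'' x = j3 (i x).
  by move=> x; rewrite /i'' /j3 -ib_pi -hj'.
have [a ->] := pi_surj y.
by have := j''u j3 j3m hj3 a; rewrite j_pi /j3 => <-.
Qed.

End Main.

Theorem proposition2p6 (P F : nmodType) (i : P -> F)
  (hP : saturated_toric_sharp P) (hi : min_free_res i)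
  (P0 : P -> Prop) (hP0 : is_face P0) :
  min_free_res (quot_map i P0 (face_gen (mimage i P0))).
Proof.
have [fgP _ _ _ _] := hP.
move: hi => [d [rays [e [egen euniq]] imorph iexact iuniv]].
exists #|~: S i egen P0|; split.
- exact: (quot_rays egen euniq imorph iexact fgP rays hP0).
- exact: (quot_free i egen euniq P0).
- exact: (ib_morph imorph hP0).
- exact: (ib_exact egen euniq imorph iexact hP0).
- move=> F' i' h1 h2 h3.
  exact: (quot_univ euniq imorph iexact hP0 iuniv h1 h2 h3).
Qed.
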